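(* Let $G=(V,E)$ be a finite, simple, undirected, connected graph, let $S\subseteq V$ be nonempty and let $\ell\geq 1$ be an integer. (i) If $S$ is an $\ell$-solid-resolving set of $G$, then $S$ is an $\{\ell\}$-resolving set of $G$. (ii) If $S$ is an $\{\ell+1\}$-resolving set of $G$, then $S$ is an $\ell$-solid-resolving set of $G$.
   Context: $d(u,v)$ is the shortest-path distance in $G$; for nonempty $X\subseteq V$, $d(s,X)=\min_{x\in X}d(s,x)$; for $S=\{s_1,\dots,s_k\}$, $\mathcal{D}_S(X)=(d(s_1,X),\dots,d(s_k,X))$. $S$ is an $\{\ell\}$-resolving set if $\mathcal{D}_S(X)\neq\mathcal{D}_S(Y)$ for all distinct nonempty $X,Y\subseteq V$ with $|X|\leq \ell$, $|Y|\leq\ell$. $S$ is an $\ell$-solid-resolving set if $\mathcal{D}_S(X)\neq\mathcal{D}_S(Y)$ for all distinct nonempty $X,Y\subseteq V$ with $|X|\leq\ell$ ($Y$ arbitrary size). *)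

(* Defs.v *)
From mathcomp Require Import all_boot.
Set Implicit Arguments. Unset Strict Implicit. Unset Printing Implicit Defensive.

Definition simple_graph (T : finType) (e : rel T) : Prop :=
  symmetric e /\ irreflexive e.

Definition connected_graph (T : finType) (e : rel T) : Prop :=
  forall u v : T, connect e u v.

Fixpoint ball (T : finType) (e : rel T) (n : nat) (u : T) : {set T} :=
  match n with
  | 0 => [set u]
  | n'.+1 => ball e n' u :|: [set y | [exists x in ball e n' u, e x y]]
  end.

(* shortest-path distance: least n with v in the n-ball around u
   (search bounded by #|T|, which suffices in a connected graph) *)
Definition dist (T : finType) (e : rel T) (u v : T) : nat :=
  find (fun n => v \in ball e n u) (iota 0 #|T|).

Definition dist_set (T : finType) (e : rel T) (s : T) (X : {set T}) : nat :=
  \big[minn/#|T|]_(x in X) dist e s x.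

(* distance vector D_S(X) = (d(s_1,X), ..., d(s_k,X)), represented as a
   function on S (vectors compared coordinatewise over s in S) *)
Definition same_vec (T : finType) (e : rel T) (S X Y : {set T}) : Prop :=
  forall s, s \in S -> dist_set e s X = dist_set e s Y.

Definition l_resolving (T : finType) (e : rel T) (l : nat) (S : {set T}) : Prop :=
  forall X Y : {set T}, X != set0 -> Y != set0 -> #|X| <= l -> #|Y| <= l ->
    X != Y -> ~ same_vec e S X Y.

Definition l_solid_resolving (T : finType) (e : rel T) (l : nat) (S : {set T}) : Prop :=
  forall X Y : {set T}, X != set0 -> Y != set0 -> #|X| <= l ->
    X != Y -> ~ same_vec e S X Y.

(* Main.v *)
Require Import Defs.
From mathcomp Require Import all_boot.

Lemma geq_bigmin_seq (I : eqType) (s : seq I) (P : pred I) (F : I -> nat) i m :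
  (m <= \big[minn/i]_(x <- s | P x) F x) = (m <= i) && all (fun x => P x ==> (m <= F x)) s.
Proof.
elim: s => [|a s IH]; first by rewrite big_nil /= andbT.
rewrite big_cons /=; case: (P a) => /=; last by rewrite IH.
by rewrite leq_min IH; case: (m <= F a); case: (m <= i).
Qed.

Lemma geq_dist_set (T : finType) (e : rel T) s (X : {set T}) m :
  (m <= dist_set e s X) <-> (m <= #|T| /\ forall x, x \in X -> m <= dist e s x).
Proof.
rewrite /dist_set geq_bigmin_seq; split.
  case/andP=> H1 /allP H2; split=> // x Hx.
  by move: (H2 x (mem_index_enum x)); rewrite Hx.
case=> H1 H2; rewrite H1 /=; apply/allP=> x _; apply/implyP; exact: H2.
Qed.

Lemma eq_from_geq (a b : nat) : (forall m, m <= a <-> m <= b) -> a = b.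
Proof.
move=> H; apply/eqP; rewrite eqn_leq; apply/andP; split.
  by apply/H. by apply/H.
Qed.

Theorem mainTheorem3 (T : finType) (e : rel T) (S : {set T}) (l : nat) :
  simple_graph e -> connected_graph e -> S != set0 -> 1 <= l ->
  (l_solid_resolving e l S -> l_resolving e l S) /\
  (l_resolving e l.+1 S -> l_solid_resolving e l S).
Proof.
move=> _ _ _ _; split.
  by move=> H X Y X0 Y0 HX _ XY; apply: H.
move=> H X Y X0 Y0 HX XY Hsame.
case: (boolP (Y \subset X)) => HYX.
  have HYl : #|Y| <= l.+1.
    apply: leq_trans (subset_leq_card HYX) _; exact: leq_trans HX (leqnSn l).
  by apply: (H X Y X0 Y0 (leq_trans HX (leqnSn l)) HYl XY).
case/subsetPn: HYX => y yY ynX.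
have Hc : #|y |: X| <= l.+1 by rewrite cardsU1 ynX add1n ltnS.
apply: (H (y |: X) X _ X0 Hc (leq_trans HX (leqnSn l))).
- by apply/set0Pn; exists y; rewrite setU11.
- apply/eqP => E; by move: ynX; rewrite -E setU11.
move=> s sS; apply: eq_from_geq => m; split.
  move/geq_dist_set=> [H1 H2]; apply/geq_dist_set; split=> // x Hx.
  by apply: H2; rewrite setU1r.
move/geq_dist_set=> [H1 H2]; apply/geq_dist_set; split=> // x.
rewrite in_setU1; case/orP; last exact: H2.
move/eqP=> ->.
have : m <= dist_set e s X by apply/geq_dist_set.
rewrite (Hsame s sS) => /geq_dist_set [_]; exact.
Qed.
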